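(* Let $(u_1,v_1)$ and $(u_2,v_2)$ be two decompositions of the $\omega$-word $uv^\omega$. If $(u_1,v_1)$ and $(u_2,v_2)$ have the same smallest period $y$, then they have the same shortest form $(x,y)$, with $u_1=xy^i$ and $u_2=xy^j$ for some $i,j\geq0$.
   Context: A decomposition of an $\omega$-word $w$ is a pair $(u,v)$ with $u\in\Sigma^*$, $v\in\Sigma^+$ and $w=uv^\omega$. Write $r\unlhd v$ if $r$ is a nonempty prefix of $v$, and $r\lhd v$ if moreover $r\neq v$. A smallest period of $(u,v)$ is a word $r$ with $r\unlhd v$, $r^\omega=v^\omega$, and $t^\omega\neq r^\omega$ for every $t\lhd r$. If $y$ is the smallest period of $(u,v)$, the shortest form of $(u,v)$ is the pair $(x,y)$ where $u=xy^i$, $v=y^j$ for some $i\geq0,j\geq1$ and $x$ is such that every $x'$ with $u=x'y^k$ ($0\le k\le i$) satisfies $x'=xy^{i-k}$ (i.e., $x$ is the shortest word with $u\in xy^*$). *)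

(* Defs.v *)
(* Finite words are [seq T] over an alphabet [T : eqType];
   an omega-word is represented as a function [nat -> option T]
   (the letter at each position; always [Some _] for u v^omega with v nonempty). *)
From mathcomp Require Import all_boot.
Set Implicit Arguments. Unset Strict Implicit. Unset Printing Implicit Defensive.

Section Words.
Variable T : eqType.

Definition wpow (y : seq T) (i : nat) : seq T := flatten (nseq i y).

Definition omega (u v : seq T) (n : nat) : option T :=
  if n < size u then onth u n else onth v ((n - size u) %% size v).

Definition oweq (w1 w2 : nat -> option T) : Prop := forall n, w1 n = w2 n.

Definition decomposition (w : nat -> option T) (u v : seq T) : Prop :=
  v != [::] /\ oweq w (omega u v).

Definition wprefix (r v : seq T) : Prop := r != [::] /\ prefix r v.
Definition sprefix (r v : seq T) : Prop := wprefix r v /\ r <> v.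

Definition smallest_period (u v r : seq T) : Prop :=
  wprefix r v /\ oweq (omega [::] r) (omega [::] v) /\
  forall t, sprefix t r -> ~ oweq (omega [::] t) (omega [::] r).

Definition shortest_form (u v x y : seq T) : Prop :=
  smallest_period u v y /\
  (exists i j, 1 <= j /\ u = x ++ wpow y i /\ v = wpow y j) /\
  (forall x' k, u = x' ++ wpow y k -> size x <= size x').

End Words.

(* Main.v *)
Require Import Defs.
From mathcomp Require Import all_boot.
Set Implicit Arguments.
Unset Strict Implicit.

Section Aux.
Variable T : eqType.
Implicit Types (a r u v x y z : seq T).

Definition per (f : nat -> option T) p := forall n, f (n + p) = f n.

Lemma omega0E r n : omega [::] r n = onth r (n %% size r).
Proof. by rewrite /omega /= subn0. Qed.

Lemma omegaE a v n :
  omega a v n = if n < size a then onth a n else omega [::] v (n - size a).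
Proof. by rewrite /omega /= subn0. Qed.

Lemma per_mul f p k : per f p -> per f (p * k).
Proof.
move=> h; elim: k => [|k IH] n; first by rewrite muln0 addn0.
by rewrite mulnS [p + _]addnC addnA h IH.
Qed.

Lemma per_sub f m d : per f (m + d) -> per f m -> per f d.
Proof.
move=> h1 h2 n; rewrite -h2 -addnA [d + m]addnC; exact: h1.
Qed.

Lemma per_gcd f p q : 0 < p -> per f p -> per f q -> per f (gcdn p q).
Proof.
move=> hp hP hQ; case: (egcdnP q hp) => km kn e _.
apply: (@per_sub f (kn * q)); first by rewrite -e mulnC; exact: per_mul.
by rewrite mulnC; exact: per_mul.
Qed.

Lemma per_mod f p : per f p -> forall n, f n = f (n %% p).
Proof.
move=> h n; rewrite {1}(divn_eq n p) addnC mulnC.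
elim: (n %/ p) => [|k IH]; first by rewrite muln0 addn0.
by rewrite mulnS [p + _]addnC addnA h.
Qed.

Lemma per_omega0 r : 0 < size r -> per (omega [::] r) (size r).
Proof. by move=> h n; rewrite !omega0E modnDr. Qed.

Lemma onth_take n (s : seq T) i : i < n -> onth (take n s) i = onth s i.
Proof. by move=> h; rewrite !onthE map_take nth_take. Qed.

Lemma onth_drop n (s : seq T) i : onth (drop n s) i = onth s (n + i).
Proof. by rewrite !onthE map_drop nth_drop. Qed.

Definition minimal y :=
  forall d, 0 < d -> per (omega [::] y) d -> size y %| d.

Lemma minper y : y != [::] ->
  (forall t, sprefix t y -> ~ oweq (omega [::] t) (omega [::] y)) -> minimal y.
Proof.
move=> hy hmin d hd hper.
have hy0 : 0 < size y by rewrite lt0n size_eq0.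
set g := gcdn (size y) d.
have hg : per (omega [::] y) g by apply: per_gcd => //; exact: per_omega0.
have g0 : 0 < g by rewrite gcdn_gt0 hy0.
have gle : g <= size y by apply: dvdn_leq => //; exact: dvdn_gcdl.
case: (ltnP g (size y)) => glt; last first.
  have -> : size y = g by apply/eqP; rewrite eqn_leq glt gle.
  exact: dvdn_gcdr.
exfalso; apply: (hmin (take g y)).
  split; [split|].
  - by rewrite -size_eq0 size_takel // -lt0n.
  - by rewrite prefixE size_takel // eqxx.
  - by move=> e; move: (f_equal size e); rewrite size_takel // => /eqP; rewrite ltn_eqF.
move=> n; rewrite omega0E size_takel // onth_take ?ltn_pmod //.
rewrite [RHS](per_mod hg) omega0E.
have hm : n %% g < size y by exact: (leq_trans (ltn_pmod n g0) gle).
by rewrite (modn_small hm).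
Qed.

Lemma oweq_lift v v' : oweq (omega [::] v) (omega [::] v') ->
  forall a n, omega a v n = omega a v' n.
Proof. by move=> e a n; rewrite (omegaE a v) (omegaE a v') e. Qed.

Lemma wpowS' y k : wpow y k.+1 = wpow y k ++ y.
Proof.
elim: k => [|k IH]; first by rewrite /wpow /= cats0.
change (wpow y k.+2) with (y ++ wpow y k.+1); rewrite IH.
by rewrite catA -[in RHS]IH.
Qed.

Lemma size_wpow y k : size (wpow y k) = k * size y.
Proof. by elim: k => [|k IH] //; rewrite /wpow /= size_cat -/(wpow y k) IH mulSn. Qed.

Lemma omega_cat_y a y n : 0 < size y -> omega (a ++ y) y n = omega a y n.
Proof.
move=> hy; rewrite (omegaE (a ++ y)) (omegaE a) size_cat onth_cat.
case: (ltnP n (size a)) => h1.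
  by rewrite (leq_trans h1 (leq_addr _ _)).
case: (ltnP n (size a + size y)) => h2.
  by rewrite omega0E modn_small // ltn_subLR.
rewrite subnDA -(per_omega0 hy (n - size a - size y)) subnK //.
by rewrite leq_subRL.
Qed.

Lemma omega_wpow a y k n : 0 < size y ->
  omega (a ++ wpow y k) y n = omega a y n.
Proof.
move=> hy; elim: k => [|k IH]; first by rewrite /wpow /= cats0.
by rewrite wpowS' catA omega_cat_y.
Qed.

Lemma reduce y : y != [::] -> forall u,
  exists x i, u = x ++ wpow y i /\ ~~ suffix y x.
Proof.
move=> hy u; have hy0 : 0 < size y by rewrite lt0n size_eq0.
suff H : forall n u, size u < n -> exists x i, u = x ++ wpow y i /\ ~~ suffix y x.
  exact: (H (size u).+1).
elim=> [|n IH] {}u // hu.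
case: (boolP (suffix y u)) => s; last by exists u, 0; rewrite /wpow /= cats0.
case/suffixP: s => u' eu.
have : size u' < n.
  by move: hu; rewrite eu size_cat ltnS => h; apply: leq_trans h; rewrite -addn1 leq_add2l.
case/IH => x [i [e ns]]; exists x, i.+1; split => //.
by rewrite wpowS' catA -e.
Qed.

Lemma wpow_letters y : y != [::] -> forall k z, size z = k * size y ->
  (forall n, n < size z -> onth z n = omega [::] y n) -> z = wpow y k.
Proof.
move=> hy; have hy0 : 0 < size y by rewrite lt0n size_eq0.
elim=> [|k IH] z hs hl.
  by apply/size0nil; rewrite hs.
have hyz : size y <= size z by rewrite hs mulSn leq_addr.
rewrite -(cat_take_drop (size y) z) /wpow /= -/(wpow y k); congr (_ ++ _).
  apply: eq_from_onth_le; rewrite size_takel // maxnn => i hi.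
  by rewrite onth_take // hl ?(leq_trans hi) // omega0E modn_small.
apply: IH; first by rewrite size_drop hs mulSn addKn.
move=> n hn; rewrite onth_drop hl; last by rewrite -ltn_subRL -size_drop.
by rewrite addnC per_omega0.
Qed.

Lemma uniq_red y : y != [::] -> minimal y -> forall x1 x2,
  ~~ suffix y x1 -> ~~ suffix y x2 ->
  (forall n, omega x1 y n = omega x2 y n) -> x1 = x2.
Proof.
move=> hy hM; have hy0 : 0 < size y by rewrite lt0n size_eq0.
move=> x1 x2; wlog: x1 x2 / size x1 <= size x2.
  move=> H s1 s2 e; case: (leqP (size x1) (size x2)) => h; first exact: H.
  symmetry; apply: H => //; first exact: ltnW.
move=> hle s1 s2 e.
have ht : take (size x1) x2 = x1.
  apply: eq_from_onth_le; rewrite size_takel // maxnn => i hi.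
  rewrite onth_take //; move: (e i); rewrite (omegaE x1) (omegaE x2) hi.
  by rewrite (leq_trans hi hle) => ->.
set z := drop (size x1) x2.
have hx2 : x2 = x1 ++ z by rewrite -{1}(cat_take_drop (size x1) x2) ht.
have hsz : size x2 = size x1 + size z by rewrite {1}hx2 size_cat.
have hper : per (omega [::] y) (size z).
  move=> n; move: (e (size x1 + (n + size z))).
  rewrite (omegaE x1) (omegaE x2) ltnNge (leq_addr (n + size z) (size x1)) /= addKn => ->.
  by rewrite hsz ltn_add2l ltnNge (leq_addl n (size z)) /= subnDl addnK.
case: (posnP (size z)) => hz.
  by move: hx2; rewrite (size0nil hz) cats0.
have hd := hM _ hz hper.
have hw : z = wpow y (size z %/ size y).
  apply: wpow_letters => //; first by rewrite divnK.
  move=> n hn; move: (e (size x1 + n)).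
  rewrite (omegaE x1) (omegaE x2) ltnNge (leq_addr n (size x1)) /= addKn.
  rewrite hsz ltn_add2l hn /= => ->.
  by rewrite /z onth_drop.
move: s2; rewrite hx2 hw.
case: (size z %/ size y) (hw) => [|k] hk.
  by move: hz; rewrite hk.
by rewrite wpowS' catA suffix_suffix.
Qed.

Lemma shortest y : y != [::] -> minimal y -> forall u x i,
  u = x ++ wpow y i -> ~~ suffix y x ->
  forall x' k, u = x' ++ wpow y k -> size x <= size x'.
Proof.
move=> hy hM; have hy0 : 0 < size y by rewrite lt0n size_eq0.
move=> u x i eu sx x' k eu'.
case: (reduce hy x') => x'' [m [e' s'']].
have : x'' = x.
  apply: (uniq_red hy hM) => // n.
  by rewrite -(omega_wpow x i n) // -eu eu' e' omega_wpow // omega_wpow.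
move=> ex; rewrite e' size_cat ex; exact: leq_addr.
Qed.

End Aux.

Theorem corollary1 (T : eqType) (u v u1 v1 u2 v2 y : seq T) :
  v != [::] ->
  decomposition (omega u v) u1 v1 ->
  decomposition (omega u v) u2 v2 ->
  smallest_period u1 v1 y ->
  smallest_period u2 v2 y ->
  exists x : seq T,
    shortest_form u1 v1 x y /\ shortest_form u2 v2 x y /\
    exists i j : nat, u1 = x ++ wpow y i /\ u2 = x ++ wpow y j.
Proof.
move=> hv [hv1 e1] [hv2 e2] sp1 sp2.
have [[hy _] [_ hmin]] := sp1.
have hy0 : 0 < size y by rewrite lt0n size_eq0.
have hM := minper hy hmin.
have vpow : forall w, w != [::] -> oweq (omega [::] y) (omega [::] w) ->
    exists j, 1 <= j /\ w = wpow y j.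
  move=> w hw ew.
  have hw0 : 0 < size w by rewrite lt0n size_eq0.
  have hd : size y %| size w.
    apply: hM => // n; rewrite !ew; exact: per_omega0.
  have hwe : w = wpow y (size w %/ size y).
    apply: wpow_letters => //; first by rewrite divnK.
    by move=> n hn; rewrite ew omega0E modn_small.
  exists (size w %/ size y); split => //.
  by rewrite divn_gt0 // dvdn_leq.
have [j1 [hj1 ev1]] := vpow _ hv1 (proj1 (proj2 sp1)).
have [j2 [hj2 ev2]] := vpow _ hv2 (proj1 (proj2 sp2)).
have e12 : forall n, omega u1 y n = omega u2 y n.
  move=> n; rewrite (oweq_lift (proj1 (proj2 sp1))) (oweq_lift (proj1 (proj2 sp2))).
  by rewrite -e1 -e2.
case: (reduce hy u1) => x1 [i1 [eu1 s1]].
case: (reduce hy u2) => x2 [i2 [eu2 s2]].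
have ex : x1 = x2.
  apply: (uniq_red hy hM) => // n.
  by rewrite -(omega_wpow x1 i1 n) // -(omega_wpow x2 i2 n) // -eu1 -eu2.
subst x2; exists x1; split; [|split].
- split => //; split; first by exists i1, j1.
  exact: (shortest hy hM eu1).
- split => //; split; first by exists i2, j2.
  exact: (shortest hy hM eu2).
- by exists i1, i2.
Qed.
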